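(* Let $\mathbf{z}_1,\dots,\mathbf{z}_m\in\mathbb{R}_{>0}^n$ and $w_1,\dots,w_m\in\mathbb{R}_{>0}$ be such that $w_i=\ell(\mathbf{z}_i)$, $i=1,\dots,m$, for some function $\ell:\mathbb{R}_{>0}^n\to\mathbb{R}_{>0}$. Then for every $\tilde\varepsilon>0$ there exist a rational $T>0$ and two functions $\psi_T,\psi'_T\in\mathrm{GPOS}_T$ with rational parameters such that $$\left|\frac{w_i-\psi_T(\mathbf{z}_i)/\psi'_T(\mathbf{z}_i)}{\min\big(w_i,\psi_T(\mathbf{z}_i)/\psi'_T(\mathbf{z}_i)\big)}\right|\leqslant\tilde\varepsilon,\quad i=1,\dots,m.$$
   Context: A posynomial is a function $\psi:\mathbb{R}_{>0}^n\to\mathbb{R}_{>0}$, $\psi(\mathbf{x})=\sum_{k=1}^K c_k\mathbf{x}^{\boldsymbol{\alpha}^{(k)}}$, with $K$ a positive integer, $c_k>0$, $\boldsymbol{\alpha}^{(k)}\in\mathbb{R}^n$, and $\mathbf{x}^{\boldsymbol{\alpha}}=x_1^{\alpha_1}\cdots x_n^{\alpha_n}$. For $T>0$, $\mathrm{GPOS}_T$ is the class of functions $\psi_T(\mathbf{x})=(\psi(\mathbf{x}^{1/T}))^T$ with $\psi$ a posynomial (powers taken entrywise). $\psi_T\in\mathrm{GPOS}_T$ has rational parameters if it can be written so with $T$ rational, all entries of the $\boldsymbol{\alpha}^{(k)}$ rational, and all $\log c_k$ rational. *)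

(* Defs.v *)
From HB Require Import structures.
From mathcomp Require Import all_boot all_order all_algebra.
From mathcomp Require Import all_classical all_reals all_analysis.
Set Implicit Arguments. Unset Strict Implicit. Unset Printing Implicit Defensive.
Import Order.TTheory GRing.Theory Num.Theory.
Local Open Scope ring_scope.

(* Rational parameter data of a posynomial in n variables:
   K terms, log-coefficients log c_k in Q, exponents alpha^(k)_j in Q. *)
Record gpos_data (n : nat) := GposData {
  gK : nat;
  glogc : 'I_gK -> rat;
  galpha : 'I_gK -> 'I_n -> rat }.
Arguments gK {n}.
Arguments glogc {n}.
Arguments galpha {n}.

Definition posy (R : realType) (n : nat) (d : gpos_data n) (x : 'I_n -> R) : R :=
  \sum_(k < gK d) expR (ratr (glogc d k)) *
     \prod_(j < n) (x j) `^ (ratr (galpha d k j)).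

Definition gposT (R : realType) (n : nat) (T : R) (d : gpos_data n) (x : 'I_n -> R) : R :=
  (posy d (fun j => x j `^ T^-1)) `^ T.

(* Main.v *)
Require Import Defs.
From HB Require Import structures.
From mathcomp Require Import all_boot all_order all_algebra.
From mathcomp Require Import all_classical all_reals all_analysis.
From mathcomp Require Import ring lra.
Import Order.TTheory GRing.Theory Num.Theory.
Local Open Scope ring_scope.

Section H.
Context {R : realType}.

Lemma ratF (e : R) : 0 < e -> exists F : R -> rat, forall x, `|ratr (F x) - x| < e.
Proof.
move=> e0.
have H : forall x : R, exists q : rat, `|ratr q - x| < e.
  move=> x; have /rat_in_itvoo[q] : x - e < x + e by lra.
  rewrite in_itv /= => /andP[h1 h2].
  exists q; rewrite ltr_norml; apply/andP; split; lra.
by case: (choice H) => F HF; exists F.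
Qed.

Lemma finlb (I : finType) (f : I -> R) : (forall i, 0 < f i) ->
  exists D, 0 < D /\ forall i, D <= f i.
Proof.
move=> fp; have s0 : 0 <= \sum_i (f i)^-1 by apply: sumr_ge0 => i _; rewrite invr_ge0 ltW.
exists (1 + \sum_i (f i)^-1)^-1; split; first by rewrite invr_gt0; lra.
move=> i; have fi := fp i.
have h : (f i)^-1 <= 1 + \sum_i (f i)^-1.
  rewrite (bigD1 i) //=.
  have : 0 <= \sum_(j | j != i) (f j)^-1 by apply: sumr_ge0 => j _; rewrite invr_ge0 ltW.
  lra.
rewrite -(invrK (f i)) lef_pV2 ?posrE ?invr_gt0 //; lra.
Qed.

Lemma term_le_sum (I : finType) (f : I -> R) i : (forall j, 0 <= f j) -> f i <= \sum_j f j.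
Proof.
move=> f0; rewrite (bigD1 i) //=.
have : 0 <= \sum_(j | j != i) f j by apply: sumr_ge0.
lra.
Qed.

Lemma powR_pos (x a : R) : 0 < x -> x `^ a = expR (a * ln x).
Proof. by move=> x0; rewrite /powR gt_eqF. Qed.

Lemma lse_lo (K : nat) (E : 'I_K -> R) k0 : E k0 <= ln (\sum_k expR (E k)).
Proof.
have h := term_le_sum _ (fun k => expR (E k)) k0 (fun j => expR_ge0 _).
rewrite -ler_expR lnK //; last first.
  by rewrite posrE; apply: lt_le_trans h; apply: expR_gt0.
Qed.

Lemma lse_hi (K : nat) (E : 'I_K -> R) M : (0 < K)%N -> (forall k, E k <= M) ->
  ln (\sum_k expR (E k)) <= M + ln K%:R.
Proof.
move=> K0 hE.
have h : \sum_k expR (E k) <= \sum_(k < K) expR M.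
  by apply: ler_sum => k _; rewrite ler_expR.
rewrite sumr_const card_ord in h.
have Kp : (0 : R) < K%:R by rewrite ltr0n.
have sp : 0 < \sum_k expR (E k).
  case: K E hE K0 h Kp => // K E _ _ _ _.
  by apply: lt_le_trans (term_le_sum _ (fun k => expR (E k)) ord0 (fun j => expR_ge0 _)); apply: expR_gt0.
rewrite -ler_expR lnK ?posrE // expRD lnK ?posrE //.
by rewrite mulr_natr.
Qed.

Lemma final_ineq (a b d eps : R) : `|a - b| <= d -> expR d <= 1 + eps ->
  `|(expR a - expR b) / Num.min (expR a) (expR b)| <= eps.
Proof.
move=> hab hd.
have ea := expR_gt0 a; have eb := expR_gt0 b.
case: (leP a b) => h.
- have -> : Num.min (expR a) (expR b) = expR a by apply: min_l; rewrite ler_expR.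
  rewrite mulrBl divff ?gt_eqF // -expRB.
  have : expR (b - a) <= expR d by rewrite ler_expR; move: hab; rewrite ler_norml; lra.
  have : 1 <= expR (b - a) by rewrite -expR0 ler_expR; lra.
  rewrite ler_norml; lra.
- have -> : Num.min (expR a) (expR b) = expR b by apply: min_r; rewrite ler_expR ltW.
  rewrite mulrBl [expR b / _]divff ?gt_eqF // -expRB.
  have : expR (a - b) <= expR d by rewrite ler_expR; move: hab; rewrite ler_norml; lra.
  have : 1 <= expR (a - b) by rewrite -expR0 ler_expR; lra.
  rewrite ler_norml; lra.
Qed.


Lemma coord_gap1 (ui uk qi qk e D : R) : `|qi - ui| < e -> `|qk - uk| < e ->
  0 < e -> 16 * e <= D -> D <= `|ui - uk| ->
  D ^+ 2 / 2 <= (2 * qi * ui - qi ^+ 2) - (2 * qk * ui - qk ^+ 2).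
Proof.
move=> h1 h2 e0 eD hD.
have -> : (2 * qi * ui - qi ^+ 2) - (2 * qk * ui - qk ^+ 2) = (qk - qi) ^+ 2 - 2 * (qk - qi) * (ui - qi) by ring.
move: h1 h2 hD; rewrite !ltr_norml !ler_normr.
move=> /andP[a1 a2] /andP[b1 b2] /orP[] hD.
- have hd : 7 * D / 8 <= qi - qk by lra.
  have p1 : 0 <= (qi - qk) * (ui - qi + e) by apply: mulr_ge0; lra.
  have p2 : 0 <= (qi - qk - 7 * D / 8) * (qi - qk) by apply: mulr_ge0; lra.
  have p3 : 0 <= (qi - qk - 7 * D / 8) * (7 * D / 8 - 2 * e) by apply: mulr_ge0; lra.
  nra.
- have hd : 7 * D / 8 <= qk - qi by lra.
  have p1 : 0 <= (qk - qi) * (e - (ui - qi)) by apply: mulr_ge0; lra.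
  have p2 : 0 <= (qk - qi - 7 * D / 8) * (qk - qi) by apply: mulr_ge0; lra.
  have p3 : 0 <= (qk - qi - 7 * D / 8) * (7 * D / 8 - 2 * e) by apply: mulr_ge0; lra.
  nra.
Qed.

Lemma gposT_eq (T : R) n (d : gpos_data n) x : 0 < T -> (0 < gK d)%N -> (forall j, 0 < x j) ->
  gposT T d x = expR (T * ln (\sum_k expR (ratr (glogc d k) +
     \sum_j ratr (galpha d k j) * (T^-1 * ln (x j))))).
Proof.
move=> T0 K0 x0; rewrite /gposT /posy.
have -> : \sum_(k < gK d) expR (ratr (glogc d k)) *
      \prod_(j < n) (x j `^ T^-1) `^ ratr (galpha d k j) =
    \sum_k expR (ratr (glogc d k) + \sum_j ratr (galpha d k j) * (T^-1 * ln (x j))).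
  apply: eq_bigr => k _; rewrite expRD expR_sum; congr (_ * _).
  by apply: eq_bigr => j _; rewrite powR_pos ?powR_gt0 // ln_powR.
rewrite powR_pos //.
by apply: lt_le_trans (term_le_sum _ _ (Ordinal K0) (fun j => expR_ge0 _)); apply: expR_gt0.
Qed.


Lemma expo_id n (T Cr br : R) (a uu : 'I_n -> R) : T != 0 ->
  ((br - Cr * \sum_j a j ^+ 2) / T + \sum_j Cr * (2 * a j) * (T^-1 * uu j)) =
  (br + Cr * \sum_j (2 * a j * uu j - a j ^+ 2)) / T.
Proof.
move=> T0.
have -> : \sum_j Cr * (2 * a j) * (T^-1 * uu j) = (\sum_j Cr * (2 * a j * uu j)) / T.
  rewrite mulr_suml; apply: eq_bigr => j _; field; exact: T0.
rewrite sumrB mulrBr !mulr_sumr.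
field; exact: T0.
Qed.

Lemma lse_bounds (T : R) K (X : 'I_K -> R) k0 M : 0 < T -> (forall k, X k <= M) ->
  X k0 <= T * ln (\sum_k expR (X k / T)) <= M + T * ln K%:R.
Proof.
move=> T0 hX; apply/andP; split.
  have := lse_lo _ (fun k => X k / T) k0.
  by rewrite -(ler_pM2l T0) [T * (X k0 / T)]mulrC divfK ?gt_eqF.
have K0 : (0 < K)%N := leq_ltn_trans (leq0n k0) (ltn_ord k0).
have := lse_hi _ (fun k => X k / T) (M / T) K0.
have h : forall k, X k / T <= M / T by move=> k; rewrite ler_pM2r ?invr_gt0.
move/(_ h); rewrite -(ler_pM2l T0) mulrDr [T * (M / T)]mulrC divfK ?gt_eqF //.
Qed.

End H.

Theorem proposition1 (R : realType) (n m : nat)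
  (z : 'I_m -> 'I_n -> R) (w : 'I_m -> R)
  (hz : forall i j, 0 < z i j) (hw : forall i, 0 < w i)
  (hl : exists l : ('I_n -> R) -> R,
          (forall x : 'I_n -> R, (forall j, 0 < x j) -> 0 < l x) /\
          (forall i, w i = l (z i))) :
  forall eps : R, 0 < eps ->
  exists (T : rat) (d d' : gpos_data n),
    0 < T /\ (0 < gK d)%N /\ (0 < gK d')%N /\
    forall i : 'I_m,
      `| (w i - gposT (ratr T) d (z i) / gposT (ratr T) d' (z i))
         / Num.min (w i) (gposT (ratr T) d (z i) / gposT (ratr T) d' (z i)) |
      <= eps.
Proof.
move=> eps eps0.
case: hl => l [lpos hwl].
case: m z w hz hw hwl => [|m] z w hz hw hwl.
  exists 1%Q, (@GposData n 1 (fun _ => 0) (fun _ _ => 0)), (@GposData n 1 (fun _ => 0) (fun _ _ => 0)).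
  by do 3 split => //; case.
pose u i c := ln (z i c).
pose v i := ln (w i).
pose dl := ln (1 + eps).
have dl0 : 0 < dl by apply: ln_gt0; lra.
have edl : expR dl <= 1 + eps by rewrite lnK // posrE; lra.
pose f := fun p : 'I_m.+1 * 'I_m.+1 * 'I_n =>
   if u p.1.1 p.2 == u p.1.2 p.2 then 1 else `|u p.1.1 p.2 - u p.1.2 p.2|.
have fpos : forall p, 0 < f p.
  move=> [[i k] c]; rewrite /f /=; case: eqP => // /eqP.
  by rewrite normr_gt0 subr_eq0.
have [D [D0 HD]] := finlb _ f fpos.
have HDu : forall i k c, u i c != u k c -> D <= `|u i c - u k c|.
  by move=> i k c h; have := HD (i, k, c); rewrite /f /= (negbTE h).
have e0 : 0 < D / 16 by rewrite divr_gt0.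
have [F HF] := ratF _ e0.
pose q k c := F (u k c).
pose qr k c : R := ratr (q k c).
pose L k i := \sum_c (2 * qr k c * u i c - qr k c ^+ 2).
pose G := D ^+ 2 / 2.
have G0 : 0 < G by rewrite divr_gt0 // exprn_gt0.
have hc : forall i k c, 0 <= (2 * qr i c * u i c - qr i c ^+ 2) - (2 * qr k c * u i c - qr k c ^+ 2).
  move=> i k c; case: (eqVneq (u i c) (u k c)) => h.
    by rewrite /qr /q h subrr.
  have := coord_gap1 (u i c) (u k c) (qr i c) (qr k c) (D / 16) D (HF (u i c)) (HF (u k c)) e0.
  have h16 : 16 * (D / 16) <= D by lra.
  move/(_ h16 (HDu i k c h)).
  have : 0 <= G by apply: ltW.
  rewrite /G; lra.
have hLle : forall i k, L k i <= L i i.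
  by move=> i k; rewrite -subr_ge0 /L -sumrB; apply: sumr_ge0 => c _; apply: hc.
have hLgap : forall i k c, u i c != u k c -> L k i + G <= L i i.
  move=> i k c h; rewrite -lerBrDl /L -sumrB (bigD1 c) //=.
  have : 0 <= \sum_(j | j != c) ((2 * qr i j * u i j - qr i j ^+ 2) - (2 * qr k j * u i j - qr k j ^+ 2)).
    by apply: sumr_ge0 => j _; apply: hc.
  have := coord_gap1 (u i c) (u k c) (qr i c) (qr k c) (D / 16) D (HF (u i c)) (HF (u k c)) e0.
  have h16 : 16 * (D / 16) <= D by lra.
  move/(_ h16 (HDu i k c h)).
  rewrite /G; lra.
pose Vmax := \sum_i `|v i|.
have hV : forall i, `|v i| <= Vmax by move=> i; apply: (term_le_sum _ (fun i => `|v i|)) => j.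
have /rat_in_itvoo[C] : 2 * Vmax / G < 2 * Vmax / G + 1 by lra.
rewrite in_itv /= => /andP[C1 _].
pose Cr : R := ratr C.
have V0 : 0 <= Vmax by apply: sumr_ge0.
have Cr0 : 0 <= Cr by apply: ltW; apply: le_lt_trans C1; apply: divr_ge0 => //; [lra | apply: ltW].
have CG : 2 * Vmax <= Cr * G by apply: ltW; rewrite -ltr_pdivrMr.
have dl2 : 0 < dl / 2 by lra.
have [Bf HB] := ratF _ dl2.
pose b k := Bf (v k).
pose br k : R := ratr (b k).
have lnm : 0 <= ln (m.+1)%:R :> R by apply: ln_ge0; rewrite ler1n.
have /rat_in_itvoo[Tq] : 0 < dl / (2 * (ln (m.+1)%:R + 1)) by apply: divr_gt0 => //; lra.
rewrite in_itv /= => /andP[T0 T1].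
pose T : R := ratr Tq.
have TlnK : T * ln (m.+1)%:R <= dl / 2.
  move: T1; rewrite ltr_pdivlMr; last by lra.
  have : 0 <= T * ln (m.+1)%:R by apply: mulr_ge0 => //; apply: ltW.
  rewrite -/T; nra.
exists Tq, (@GposData n m.+1 (fun k => (b k - C * \sum_c q k c ^+ 2) / Tq) (fun k c => C * (2 * q k c))),
  (@GposData n m.+1 (fun k => (0 - C * \sum_c q k c ^+ 2) / Tq) (fun k c => C * (2 * q k c))).
split; first by rewrite -(ltr0q R).
split; first by []. split; first by [].
move=> i.
have Tp : 0 < T := T0.
have Tn : T != 0 by rewrite gt_eqF.
rewrite !gposT_eq //= -/T.
have EN : forall k, ratr ((b k - C * \sum_c q k c ^+ 2) / Tq) +
     \sum_j ratr (C * (2 * q k j)) * (T^-1 * ln (z i j)) = (br k + Cr * L k i) / T.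
  move=> k; rewrite -expo_id //.
  rewrite fmorph_div rmorphB rmorphM rmorph_sum /=.
  congr (_ / _ + _); last by apply: eq_bigr => j _; rewrite rmorphM rmorphM /= ratr_nat.
  by congr (_ - _ * _); apply: eq_bigr => j _; rewrite rmorphXn.
have ED : forall k, ratr ((0 - C * \sum_c q k c ^+ 2) / Tq) +
     \sum_j ratr (C * (2 * q k j)) * (T^-1 * ln (z i j)) = (0 + Cr * L k i) / T.
  move=> k; rewrite -expo_id //.
  rewrite fmorph_div rmorphB rmorphM rmorph_sum /= rmorph0.
  congr (_ / _ + _); last by apply: eq_bigr => j _; rewrite rmorphM rmorphM /= ratr_nat.
  by congr (_ - _ * _); apply: eq_bigr => j _; rewrite rmorphXn.
under eq_bigr do rewrite EN.
under [X in _ / expR (T * ln X)]eq_bigr do rewrite ED.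
set Nn := T * ln (\sum_(k < m.+1) expR ((br k + Cr * L k i) / T)).
set Dn := T * ln (\sum_(k < m.+1) expR ((0 + Cr * L k i) / T)).
have hwi : w i = expR (v i) by rewrite /v lnK // posrE.
rewrite hwi -expRB.
apply: (final_ineq (v i) (Nn - Dn) dl eps _ edl).
have hden : forall k, 0 + Cr * L k i <= 0 + Cr * L i i.
  by move=> k; rewrite !add0r; apply: ler_wpM2l.
have hnum : forall k, br k + Cr * L k i <= v i + dl / 2 + Cr * L i i.
  move=> k; have := HB (v k); rewrite -/(b k) -/(br k) ltr_norml => /andP[hb1 hb2].
  case: (boolP [exists c, u i c != u k c]) => [/existsP[c hc'] | /existsPn hall].
    have := hLgap i k c hc'.
    move/(ler_wpM2l Cr0); rewrite mulrDr => hg.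
    have := hV i; have := hV k.
    have := ler_norm (v k); have := ler_norm (- v i); rewrite normrN.
    lra.
  have hu : forall c, u k c = u i c by move=> c; have := hall c; rewrite negbK => /eqP ->.
  have zik : z i = z k.
    apply/funext => c; rewrite -[z i c]lnK ?posrE // -[z k c]lnK ?posrE //.
    by have := hu c; rewrite /u => ->.
  have vik : v k = v i by rewrite /v !hwl zik.
  have Lik : L k i = L i i by apply: eq_bigr => c _; rewrite /qr /q hu.
  rewrite Lik; lra.
have N12 : br i + Cr * L i i <= Nn <= v i + dl / 2 + Cr * L i i + T * ln (m.+1)%:R :=
  lse_bounds T _ (fun k => br k + Cr * L k i) i _ Tp hnum.
have D12 : 0 + Cr * L i i <= Dn <= 0 + Cr * L i i + T * ln (m.+1)%:R :=
  lse_bounds T _ (fun k => 0 + Cr * L k i) i _ Tp hden.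
move: N12 D12 => /andP[N1 N2] /andP[D1 D2].
have := HB (v i); rewrite -/(b i) -/(br i) ltr_norml => /andP[hb1 hb2].
rewrite ler_norml; apply/andP; split; lra.
Qed.
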